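(* Under the standing assumptions below, let $\kappa>0$, $\tau\ge L_{\nabla P_\rho}+\kappa$, $\alpha_y\in(0,1/(L_{\nabla P_\rho}+\tau))$, $\alpha_x\in(0,1/L_{\nabla\vartheta})$, and let the iterates be generated by PG-MAD. Then for $k=0,\dots,K-1$, with $w^k=(x^k,z^k,u^k,v^k)$, $$\frac{1-\alpha_xL_{\nabla\vartheta}}{4\alpha_x}\|w^{k+1}-w^k\|^2\le\vartheta(w^k)-\vartheta(w^{k+1})+\frac{2\alpha_x(L_{\nabla f}^2+\rho^2L_{\nabla g}^2+\tau^2)}{\kappa(1-\alpha_xL_{\nabla\vartheta})}(1-\kappa\alpha_y)^T\Delta_k.$$
   Context: Standing setting. $\mathcal X\subset\mathbb R^{d_x}$, $\mathcal Y\subset\mathbb R^{d_y}$, $\Lambda\subset\mathbb R^{d_\lambda}$ are nonempty convex compact sets. $f(x,y,\lambda):=\bar f(x,y)+\lambda^T(Ax+By-c)$ with $\bar f$ continuously differentiable; $L_{\nabla f}>0$ is a Lipschitz constant of $\nabla f$ on $\mathcal X\times\mathcal Y\times\Lambda$. $g$ is continuously differentiable, $\nabla g$ is $L_{\nabla g}$-Lipschitz on $\mathcal Y\times\Lambda$, $g(\cdot,\lambda)$ is convex for each $\lambda\in\Lambda$, and $g$ has a saddle point $(z^*,\lambda^* )\in\mathcal Y\times\Lambda$: $g(z^*,\lambda^* )=\max_{\lambda\in\Lambda}\min_{z\in\mathcal Y}g(z,\lambda)=\min_{z\in\mathcal Y}\max_{\lambda\in\Lambda}g(z,\lambda)$.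 For $\rho>0$: $P_\rho(x,y,\lambda,z):=f(x,y,\lambda)-\rho(g(y,\lambda)-g(z,\lambda))$, $L_{\nabla P_\rho}:=L_{\nabla f}+2\rho L_{\nabla g}$; $Q(x,z,u,v,y,\lambda):=P_\rho(x,y,\lambda,z)-\frac\tau2\|(y,\lambda)-(u,v)\|^2$; $\vartheta(x,z,u,v):=\max_{y\in\mathcal Y,\lambda\in\Lambda}Q(x,z,u,v,y,\lambda)$; $L_{\nabla\vartheta}:=(L_{\nabla f}+\rho L_{\nabla g}+2\tau)(1+(L_{\nabla P_\rho}+\tau)\kappa^{-1})$. $\mathrm{proj}_C$ is Euclidean projection; $\nabla_1g$ is the gradient of $g$ in its first argument. PG-MAD: given $\rho,\kappa>0$, $\tau\ge L_{\nabla P_\rho}+\kappa$, $\alpha_x,\alpha_y>0$, integers $T,K>1$, and $x^0\in\mathcal X$, $z^0,y^0\in\mathcal Y$, $\lambda^0\in\Lambda$, $u^0\in\mathbb R^{d_y}$, $v^0\in\mathbb R^{d_\lambda}$: for $k=0,\dots,K-1$, set $(y^{[0]}(k),\lambda^{[0]}(k))=(y^k,\lambda^k)$; for $t=0,\dots,T-1$, $y^{[t+1]}(k)=\mathrm{proj}_{\mathcal Y}[y^{[t]}(k)+\alpha_y\nabla_yQ(x^k,z^k,u^k,v^k,y^{[t]}(k),\lambda^{[t]}(k))]$, $\lambda^{[t+1]}(k)=\mathrm{proj}_{\Lambda}[\lambda^{[t]}(k)+\alpha_y\nabla_\lambda Q(x^k,z^k,u^k,v^k,y^{[t]}(k),\lambda^{[t]}(k))]$;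 set $(y^{k+1},\lambda^{k+1})=(y^{[T]}(k),\lambda^{[T]}(k))$; then $x^{k+1}=\mathrm{proj}_{\mathcal X}[x^k-\alpha_x\nabla_xf(x^k,y^{k+1},\lambda^{k+1})]$, $z^{k+1}=\mathrm{proj}_{\mathcal Y}[z^k-\alpha_x\rho\nabla_1g(z^k,\lambda^{k+1})]$, $u^{k+1}=(1+\alpha_x\tau)u^k-\alpha_x\tau y^{k+1}$, $v^{k+1}=(1+\alpha_x\tau)v^k-\alpha_x\tau\lambda^{k+1}$. Notation: $Q^{(k)}(y,\lambda):=Q(x^k,z^k,u^k,v^k,y,\lambda)$; $\Delta_k:=\vartheta(x^k,z^k,u^k,v^k)-Q^{(k)}(y^k,\lambda^k)$. *)

(* Defs.v *)
From HB Require Import structures.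
From mathcomp Require Import all_boot all_order all_algebra.
From mathcomp Require Import all_classical all_reals all_analysis.
Set Implicit Arguments. Unset Strict Implicit. Unset Printing Implicit Defensive.
Import Order.TTheory GRing.Theory Num.Theory.
Import numFieldNormedType.Exports.
Local Open Scope classical_set_scope.
Local Open Scope ring_scope.

Section Defs.
Variable R : realType.

Definition dotv n (u v : 'rV[R]_n) : R := \sum_(i < n) u ord0 i * v ord0 i.
Definition sqn n (u : 'rV[R]_n) : R := dotv u u.
Definition enorm n (u : 'rV[R]_n) : R := Num.sqrt (sqn u).

Definition enorm2 m n (a : 'rV[R]_m) (b : 'rV[R]_n) : R := Num.sqrt (sqn a + sqn b).
Definition enorm3 m n p (a : 'rV[R]_m) (b : 'rV[R]_n) (c : 'rV[R]_p) : R :=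
  Num.sqrt (sqn a + sqn b + sqn c).

Definition is_proj n (C : set 'rV[R]_n) (a p : 'rV[R]_n) : Prop :=
  C p /\ forall q, C q -> enorm (a - p) <= enorm (a - q).

Definition is_C1_grad m n (F : 'rV[R]_m -> 'rV[R]_n -> R)
    (G1 : 'rV[R]_m -> 'rV[R]_n -> 'rV[R]_m) (G2 : 'rV[R]_m -> 'rV[R]_n -> 'rV[R]_n) : Prop :=
  (forall a b,
    differentiable (fun p : 'rV[R]_m * 'rV[R]_n => F p.1 p.2) (a, b) /\
    forall h : 'rV[R]_m * 'rV[R]_n,
      'd (fun p : 'rV[R]_m * 'rV[R]_n => F p.1 p.2) (a, b) h
        = dotv (G1 a b) h.1 + dotv (G2 a b) h.2) /\
  continuous (fun p : 'rV[R]_m * 'rV[R]_n => G1 p.1 p.2) /\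
  continuous (fun p : 'rV[R]_m * 'rV[R]_n => G2 p.1 p.2).

End Defs.

(* Problem data. A : 'M_(dl,dx), B : 'M_(dl,dy), c : R^dl (row vector).
   The column-vector expression A x is written x *m A^T. *)
Unset Implicit Arguments.
Record pdata (R : realType) := PData {
  dx : nat; dy : nat; dl : nat;
  Xs : set 'rV[R]_dx; Ys : set 'rV[R]_dy; Ls : set 'rV[R]_dl;
  Am : 'M[R]_(dl, dx); Bm : 'M[R]_(dl, dy); cv : 'rV[R]_dl;
  fbar : 'rV[R]_dx -> 'rV[R]_dy -> R;
  fbar_x : 'rV[R]_dx -> 'rV[R]_dy -> 'rV[R]_dx;
  fbar_y : 'rV[R]_dx -> 'rV[R]_dy -> 'rV[R]_dy;
  gfun : 'rV[R]_dy -> 'rV[R]_dl -> R;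
  g_1 : 'rV[R]_dy -> 'rV[R]_dl -> 'rV[R]_dy;
  g_2 : 'rV[R]_dy -> 'rV[R]_dl -> 'rV[R]_dl
}.
Arguments dx {R}. Arguments dy {R}. Arguments dl {R}. Arguments Xs {R}. Arguments Ys {R}. Arguments Ls {R}.
Arguments Am {R}. Arguments Bm {R}. Arguments cv {R}. Arguments fbar {R}. Arguments fbar_x {R}.
Arguments fbar_y {R}. Arguments gfun {R}. Arguments g_1 {R}. Arguments g_2 {R}.
Set Implicit Arguments.

Section Problem.
Variables (R : realType) (D : pdata R) (rho tau : R).
Local Notation dx := (dx D). Local Notation dy := (dy D). Local Notation dl := (dl D).

Definition fval (x : 'rV[R]_dx) (y : 'rV[R]_dy) (l : 'rV[R]_dl) : R :=
  fbar D x y + dotv l (x *m (Am D)^T + y *m (Bm D)^T - cv D).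
Definition grad_fx x y (l : 'rV[R]_dl) : 'rV[R]_dx := fbar_x D x y + l *m Am D.
Definition grad_fy x y (l : 'rV[R]_dl) : 'rV[R]_dy := fbar_y D x y + l *m Bm D.
Definition grad_fl (x : 'rV[R]_dx) (y : 'rV[R]_dy) (l : 'rV[R]_dl) : 'rV[R]_dl :=
  x *m (Am D)^T + y *m (Bm D)^T - cv D.

Definition Prho x y l (z : 'rV[R]_dy) : R := fval x y l - rho * (gfun D y l - gfun D z l).

Definition Qfun x (z u : 'rV[R]_dy) (v : 'rV[R]_dl) y l : R :=
  Prho x y l z - tau / 2 * (sqn (y - u) + sqn (l - v)).
Definition grad_Qy x (z u : 'rV[R]_dy) (v : 'rV[R]_dl) y l : 'rV[R]_dy :=
  grad_fy x y l - rho *: g_1 D y l - tau *: (y - u).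
Definition grad_Ql x (z u : 'rV[R]_dy) (v : 'rV[R]_dl) y l : 'rV[R]_dl :=
  grad_fl x y l - rho *: (g_2 D y l - g_2 D z l) - tau *: (l - v).

Definition vartheta x (z u : 'rV[R]_dy) (v : 'rV[R]_dl) : R :=
  sup [set Qfun x z u v p.1 p.2 | p in Ys D `*` Ls D].

End Problem.
Arguments fval {R} D. Arguments grad_fx {R} D. Arguments grad_fy {R} D.
Arguments grad_fl {R} D. Arguments Prho {R} D. Arguments Qfun {R} D.
Arguments grad_Qy {R} D. Arguments grad_Ql {R} D. Arguments vartheta {R} D.

(* Main.v *)
Require Import Defs.
From HB Require Import structures.
From mathcomp Require Import all_boot all_order all_algebra.
From mathcomp Require Import all_classical all_reals all_analysis.
From mathcomp Require Import ring lra.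
Import Order.TTheory GRing.Theory Num.Theory.
Import numFieldNormedType.Exports.
Local Open Scope classical_set_scope.
Local Open Scope ring_scope.

Section Alg.
Context {R : realType}.
Implicit Types (n : nat).

Lemma dotvC {n} (a b : 'rV[R]_n) : dotv a b = dotv b a.
Proof. by apply: eq_bigr => i _; rewrite mulrC. Qed.
Lemma dotvDl {n} (a b c : 'rV[R]_n) : dotv (a + b) c = dotv a c + dotv b c.
Proof. by rewrite /dotv -big_split; apply: eq_bigr => i _; rewrite !mxE mulrDl. Qed.
Lemma dotvDr {n} (a b c : 'rV[R]_n) : dotv c (a + b) = dotv c a + dotv c b.
Proof. by rewrite dotvC dotvDl !(dotvC c). Qed.
Lemma dotvZl {n} t (a b : 'rV[R]_n) : dotv (t *: a) b = t * dotv a b.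
Proof. by rewrite /dotv mulr_sumr; apply: eq_bigr => i _; rewrite !mxE mulrA. Qed.
Lemma dotvZr {n} t (a b : 'rV[R]_n) : dotv b (t *: a) = t * dotv b a.
Proof. by rewrite dotvC dotvZl dotvC. Qed.
Lemma dotvNl {n} (a b : 'rV[R]_n) : dotv (- a) b = - dotv a b.
Proof. by rewrite -scaleN1r dotvZl mulN1r. Qed.
Lemma dotvNr {n} (a b : 'rV[R]_n) : dotv b (- a) = - dotv b a.
Proof. by rewrite dotvC dotvNl dotvC. Qed.
Lemma dotvBl {n} (a b c : 'rV[R]_n) : dotv (a - b) c = dotv a c - dotv b c.
Proof. by rewrite dotvDl dotvNl. Qed.
Lemma dotvBr {n} (a b c : 'rV[R]_n) : dotv c (a - b) = dotv c a - dotv c b.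
Proof. by rewrite dotvDr dotvNr. Qed.
Lemma dotv0l {n} (a : 'rV[R]_n) : dotv 0 a = 0.
Proof. by rewrite /dotv big1 // => i _; rewrite mxE mul0r. Qed.
Lemma dotv0r {n} (a : 'rV[R]_n) : dotv a 0 = 0.
Proof. by rewrite dotvC dotv0l. Qed.

Lemma sqn_ge0 {n} (a : 'rV[R]_n) : 0 <= sqn a.
Proof. by apply: sumr_ge0 => i _; rewrite -expr2 sqr_ge0. Qed.
Lemma sqnD {n} (a b : 'rV[R]_n) : sqn (a + b) = sqn a + 2 * dotv a b + sqn b.
Proof. rewrite /sqn !dotvDl !dotvDr (dotvC b a); ring. Qed.
Lemma sqnB {n} (a b : 'rV[R]_n) : sqn (a - b) = sqn a - 2 * dotv a b + sqn b.
Proof. rewrite /sqn !dotvBl !dotvBr (dotvC b a); ring. Qed.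
Lemma sqnZ {n} t (a : 'rV[R]_n) : sqn (t *: a) = t ^+ 2 * sqn a.
Proof. rewrite /sqn dotvZl dotvZr; ring. Qed.
Lemma sqnN {n} (a : 'rV[R]_n) : sqn (- a) = sqn a.
Proof. by rewrite /sqn dotvNl dotvNr opprK. Qed.
Lemma sqn0 n : sqn (0 : 'rV[R]_n) = 0.
Proof. by rewrite /sqn dotv0l. Qed.

Lemma sqn_eq0 {n} (a : 'rV[R]_n) : sqn a = 0 -> a = 0.
Proof.
move=> h; apply/rowP => i; rewrite mxE.
have := @psumr_eq0P R _ predT (fun i => a ord0 i * a ord0 i).
move=> /(_ (fun j _ => ltac:(by rewrite -expr2 sqr_ge0))) /(_ h i isT).
by move/eqP; rewrite mulf_eq0 orbb => /eqP.
Qed.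

Lemma dotv_mulmxT {m n} (l : 'rV[R]_m) (x : 'rV[R]_n) (A : 'M[R]_(m, n)) :
  dotv l (x *m A^T) = dotv (l *m A) x.
Proof.
rewrite /dotv; under eq_bigr do rewrite !mxE big_distrr /=.
rewrite exchange_big /=; apply: eq_bigr => j _; rewrite !mxE big_distrl /=.
by apply: eq_bigr => i _; rewrite !mxE; ring.
Qed.

Lemma dotv_le {n} (e d : 'rV[R]_n) M : 0 <= M -> sqn e <= M ^+ 2 * sqn d ->
  dotv e d <= M * sqn d.
Proof.
move=> M0 h; have [M00|Mgt0] := eqVneq M 0.
  have : sqn e = 0 by apply/eqP; rewrite eq_le sqn_ge0 andbT; move: h; rewrite M00 expr2 !mul0r.
  by move/sqn_eq0 ->; rewrite dotv0l M00 mul0r.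
have Mp : 0 < M by rewrite lt_def Mgt0 M0.
have := sqn_ge0 (e - M *: d); rewrite sqnB sqnZ dotvZr => h2.
have : M * dotv e d <= M * (M * sqn d) by nra.
by rewrite ler_pM2l.
Qed.

Lemma dotv_absle {n} (e d : 'rV[R]_n) M : 0 <= M -> sqn e <= M ^+ 2 * sqn d ->
  `|dotv e d| <= M * sqn d.
Proof.
move=> M0 h; rewrite ler_norml dotv_le // andbT lerNl -dotvNl dotv_le //.
by rewrite sqnN.
Qed.

Lemma young {n} (a b : 'rV[R]_n) c : 0 < c -> 2 * dotv a b <= c * sqn a + sqn b / c.
Proof.
move=> c0; have := sqn_ge0 (c *: a - b); rewrite sqnB sqnZ dotvZl => h.
have : 0 <= (c ^+ 2 * sqn a - 2 * (c * dotv a b) + sqn b) / c by rewrite divr_ge0 // ltW.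
have -> : (c ^+ 2 * sqn a - 2 * (c * dotv a b) + sqn b) / c =
   c * sqn a - 2 * dotv a b + sqn b / c by field; rewrite gt_eqF.
lra.
Qed.

Lemma sqrt_le_sq (x y L : R) : 0 <= x -> 0 <= y -> 0 <= L ->
  Num.sqrt x <= L * Num.sqrt y -> x <= L ^+ 2 * y.
Proof.
move=> x0 y0 L0 h.
have : Num.sqrt x ^+ 2 <= (L * Num.sqrt y) ^+ 2.
  by rewrite ler_sqr // nnegrE ?sqrtr_ge0 ?mulr_ge0 ?sqrtr_ge0.
by rewrite exprMn !sqr_sqrtr.
Qed.

Lemma enorm3_sq {m n p} {a a' : 'rV[R]_m} {b b' : 'rV[R]_n} {c c' : 'rV[R]_p} {L : R} :
  0 <= L -> enorm3 a b c <= L * enorm3 a' b' c' ->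
  sqn a + sqn b + sqn c <= L ^+ 2 * (sqn a' + sqn b' + sqn c').
Proof. by move=> L0; apply: sqrt_le_sq => //; rewrite !addr_ge0 ?sqn_ge0. Qed.

Lemma enorm2_sq {m n} {a a' : 'rV[R]_m} {b b' : 'rV[R]_n} {L : R} :
  0 <= L -> enorm2 a b <= L * enorm2 a' b' ->
  sqn a + sqn b <= L ^+ 2 * (sqn a' + sqn b').
Proof. by move=> L0; apply: sqrt_le_sq => //; rewrite !addr_ge0 ?sqn_ge0. Qed.

Lemma enorm_le {n} {a b : 'rV[R]_n} : enorm a <= enorm b -> sqn a <= sqn b.
Proof. by rewrite /enorm ler_sqrt // sqn_ge0. Qed.

Lemma dotv_row_mx {m n} (a c : 'rV[R]_m) (b d : 'rV[R]_n) :
  dotv (row_mx a b) (row_mx c d) = dotv a c + dotv b d.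
Proof.
by rewrite /dotv big_split_ord /=; congr (_ + _); apply: eq_bigr => i _;
  rewrite ?row_mxEl ?row_mxEr.
Qed.
Lemma sqn_row_mx {m n} (a : 'rV[R]_m) (b : 'rV[R]_n) :
  sqn (row_mx a b) = sqn a + sqn b.
Proof. exact: dotv_row_mx. Qed.

End Alg.

Section Der.
Context {R : realType}.

Lemma poly2_derive (al be ga s : R) :
  is_derive s 1 (fun t : R => al + t * be + t ^+ 2 * ga) (be + 2 * s * ga).
Proof.
have h1 := is_deriveD (is_deriveD (is_derive_cst al s 1) (is_deriveM (is_derive_id s 1) (is_derive_cst be s 1))) (is_deriveM (is_deriveX 2 (is_derive_id s 1)) (is_derive_cst ga s 1)).
eapply is_derive_eq. exact h1.
rewrite /= !fctE /=.
have E : forall k : R, k%:A = k by move=> k; rewrite /GRing.scale/= mulr1.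
rewrite !scaler0 !add0r expr1 !E.
rewrite /GRing.scale/=. ring.
Qed.

Lemma line_is_derive (V : normedModType R) (f : V -> R) (c d : V) (s : R) :
  differentiable f (c + s *: d) ->
  is_derive s 1 (fun t : R => f (c + t *: d)) ('d f (c + s *: d) d).
Proof.
move=> df.
have E : (fun h : R => h^-1 *: (((fun t => f (c + t *: d)) \o shift s) (h *: 1) - f (c + s *: d)))
  = (fun h => h^-1 *: ((f \o shift (c + s *: d)) (h *: d) - f (c + s *: d))).
  apply/funext => h /=; congr (_ *: (f _ - _)).
  have -> : h%:A = h by rewrite /GRing.scale/= mulr1.
  by rewrite scalerDl addrCA.
split; first by rewrite /derivable E; exact: diff_derivable.
by rewrite /derive E; exact: deriveE.
Qed.

Lemma C1_line {m n} (F : 'rV[R]_m -> 'rV[R]_n -> R) G1 G2 (hF : is_C1_grad F G1 G2)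
  (a1 d1 : 'rV[R]_m) (a2 d2 : 'rV[R]_n) (s : R) :
  is_derive s 1 (fun t => F (a1 + t *: d1) (a2 + t *: d2))
    (dotv (G1 (a1 + s *: d1) (a2 + s *: d2)) d1 + dotv (G2 (a1 + s *: d1) (a2 + s *: d2)) d2).
Proof.
have [hd _] := hF; have [dF eF] := hd (a1 + s *: d1) (a2 + s *: d2).
have := @line_is_derive _ (fun p : 'rV[R]_m * 'rV[R]_n => F p.1 p.2) (a1, a2) (d1, d2) s dF.
by rewrite eF.
Qed.

Lemma nincr01 (psi dpsi : R -> R) : (forall s : R, is_derive s 1 psi (dpsi s)) ->
  (forall s, 0 <= s <= 1 -> dpsi s <= 0) -> psi 1 <= psi 0.
Proof.
move=> hd hle.
have dv : forall x, derivable psi x 1 by move=> x; case: (hd x).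
apply: (@ler0_derive1_le_cc R psi 0 1).
- by move=> x _; exact: dv.
- move=> x; rewrite in_itv /= => /andP[h0 h1].
  by rewrite derive1E derive_val hle // ltW // ltW.
- by apply: derivable_within_continuous => x _; exact: dv.
- by rewrite in_itv /= lexx ler01.
- by rewrite in_itv /= lexx ler01.
- exact: ler01.
Qed.

Lemma descent1 (phi dphi : R -> R) L : (forall s : R, is_derive s 1 phi (dphi s)) ->
  (forall s, 0 <= s <= 1 -> `|dphi s - dphi 0| <= L * s) ->
  `|phi 1 - phi 0 - dphi 0| <= L / 2.
Proof.
move=> hd hL.
have p1 : forall c : R, (forall s : R, is_derive s 1 (fun t => phi t - (0 + t * dphi 0 + t ^+ 2 * c))
        (dphi s - (dphi 0 + 2 * s * c))).
  move=> c s; eapply is_derive_eq.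
    exact: (is_deriveB (hd s) (poly2_derive 0 (dphi 0) c s)).
  by [].
have A := @nincr01 _ _ (p1 (L / 2)).
have B := @nincr01 _ _ (fun s => is_deriveN (p1 (- (L / 2)) s)).
rewrite ler_norml; apply/andP; split.
- suff : phi 0 - phi 1 + dphi 0 - L / 2 <= 0 by lra.
  have : - (phi 1 - (0 + 1 * dphi 0 + 1 ^+ 2 * - (L / 2))) <= - (phi 0 - (0 + 0 * dphi 0 + 0 ^+ 2 * - (L / 2))).
    apply: B => s /andP[s0 s1]; have := hL s; rewrite s0 s1 /= => /(_ isT).
    rewrite ler_norml => /andP[h1 h2]. lra.
  rewrite expr1n expr0n /=; lra.
- have : phi 1 - (0 + 1 * dphi 0 + 1 ^+ 2 * (L / 2)) <= phi 0 - (0 + 0 * dphi 0 + 0 ^+ 2 * (L / 2)).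
    apply: A => s /andP[s0 s1]; have := hL s; rewrite s0 s1 /= => /(_ isT).
    rewrite ler_norml => /andP[h1 h2]. lra.
  rewrite expr1n expr0n /=; lra.
Qed.

End Der.

Section Conv.
Context {R : realType}.
Lemma convex_line {n} {A : set 'rV[R]_n} {a b : 'rV[R]_n} {t : R} :
  convex_set A -> A a -> A b -> 0 <= t <= 1 -> A (a + t *: (b - a)).
Proof.
move=> cA Aa Ab /andP[t0 t1].
have := cA b a (Itv01 t0 t1); rewrite !inE => /(_ Ab Aa).
congr A; change (t *: b + (1 - t) *: a = a + t *: (b - a)).
by rewrite scalerBr scalerBl scale1r addrCA.
Qed.


Lemma le0_of (x S : R) : 0 <= S -> (forall t, 0 < t <= 1 -> 2 * x <= t * S) -> x <= 0.
Proof.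
move=> S0 h; rewrite leNgt; apply/negP => x0.
have xS : 0 < x + S by lra.
have t0 : 0 < x / (x + S) by rewrite divr_gt0.
have t1 : x / (x + S) <= 1 by rewrite ler_pdivrMr // mul1r; lra.
have := h (x / (x + S)); rewrite t0 t1 => /(_ isT).
have : x / (x + S) * S <= x.
  rewrite mulrAC ler_pdivrMr //; nra.
lra.
Qed.

Lemma proj_vi {n} (C : set 'rV[R]_n) a p q : convex_set C -> is_proj C a p -> C q ->
  dotv (a - p) (q - p) <= 0.
Proof.
move=> cC [Cp hmin] Cq; apply: (@le0_of _ (sqn (q - p))); first exact: sqn_ge0.
move=> t /andP[t0 t1].
have Ct := @convex_line n C p q t cC Cp Cq; rewrite (ltW t0) t1 in Ct; have {}Ct := Ct isT.
have := enorm_le (hmin _ Ct).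
rewrite (_ : a - (p + t *: (q - p)) = (a - p) - t *: (q - p)); last by rewrite opprD addrA.
rewrite [sqn (_ - t *: _)]sqnB sqnZ dotvZr => h.
have : t * (2 * dotv (a - p) (q - p)) <= t * (t * sqn (q - p)) by nra.
by rewrite ler_pM2l.
Qed.
End Conv.

Section Opt.
Context {R : realType} {m n : nat}.
Context {C1 : set 'rV[R]_m} {C2 : set 'rV[R]_n} {Qp : 'rV[R]_m -> 'rV[R]_n -> R}
  {g1 : 'rV[R]_m -> 'rV[R]_n -> 'rV[R]_m} {g2 : 'rV[R]_m -> 'rV[R]_n -> 'rV[R]_n} {kap L : R}.
Hypotheses (cC1 : convex_set C1) (cC2 : convex_set C2) (kap0 : 0 < kap).
Hypothesis hU : forall y l y' l', C1 y -> C2 l -> C1 y' -> C2 l' ->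
  Qp y' l' <= Qp y l + (dotv (g1 y l) (y' - y) + dotv (g2 y l) (l' - l))
              - kap / 2 * (sqn (y' - y) + sqn (l' - l)).
Hypothesis hLo : forall y l y' l', C1 y -> C2 l -> C1 y' -> C2 l' ->
  Qp y l + (dotv (g1 y l) (y' - y) + dotv (g2 y l) (l' - l))
    - L / 2 * (sqn (y' - y) + sqn (l' - l)) <= Qp y' l'.

Lemma q_combo {y l y' l'} th : C1 y -> C2 l -> C1 y' -> C2 l' -> 0 <= th <= 1 ->
  (1 - th) * Qp y l + th * Qp y' l' + kap / 2 * th * (1 - th) * (sqn (y' - y) + sqn (l' - l))
  <= Qp (y + th *: (y' - y)) (l + th *: (l' - l)).
Proof.
move=> Cy Cl Cy' Cl' /andP[th0 th1].
have Cyt : C1 (y + th *: (y' - y)) by apply: convex_line => //; rewrite th0 th1.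
have Clt : C2 (l + th *: (l' - l)) by apply: convex_line => //; rewrite th0 th1.
have h1 := hU _ _ _ _ Cyt Clt Cy Cl.
have h2 := hU _ _ _ _ Cyt Clt Cy' Cl'.
have e1 : forall k (a b : 'rV[R]_k), a - (a + th *: (b - a)) = (- th) *: (b - a).
  by move=> k a b; rewrite opprD addrA subrr add0r scaleNr.
have e2 : forall k (a b : 'rV[R]_k), b - (a + th *: (b - a)) = (1 - th) *: (b - a).
  by move=> k a b; rewrite scalerBl scale1r opprD addrA.
rewrite !e1 !e2 !dotvZr !sqnZ in h1 h2.
set Qt := Qp _ _ in h1 h2 *.
set A1 := dotv _ (y' - y) in h1 h2; set A2 := dotv _ (l' - l) in h1 h2.
have s1 := sqn_ge0 (y' - y); have s2 := sqn_ge0 (l' - l).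
set N1 := sqn (y' - y) in h1 h2 s1 *; set N2 := sqn (l' - l) in h1 h2 s2 *.
have k1 : 0 <= 1 - th by lra.
have h1' := ler_wpM2l k1 h1; have h2' := ler_wpM2l th0 h2.
nra.
Qed.

Lemma Q_bounded {y l y' l'} : C1 y -> C2 l -> C1 y' -> C2 l' ->
  Qp y' l' <= Qp y l + (sqn (g1 y l) + sqn (g2 y l)) / (2 * kap).
Proof.
move=> Cy Cl Cy' Cl'; have h := hU _ _ _ _ Cy Cl Cy' Cl'.
have kapi : 0 < kap^-1 by rewrite invr_gt0.
have i1 := young (g1 y l) (y' - y) _ kapi.
have i2 := young (g2 y l) (l' - l) _ kapi.
rewrite invrK in i1 i2.
have -> : (sqn (g1 y l) + sqn (g2 y l)) / (2 * kap) = (kap^-1 * sqn (g1 y l) + kap^-1 * sqn (g2 y l)) / 2.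
  by field; rewrite gt_eqF.
lra.
Qed.

Definition SQ := [set Qp p.1 p.2 | p in C1 `*` C2].
Arguments SQ : clear implicits.

Lemma SQ_has_sup {y0 l0} : C1 y0 -> C2 l0 -> has_sup SQ.
Proof.
move=> Cy Cl; split; first by exists (Qp y0 l0); exists (y0, l0).
exists (Qp y0 l0 + (sqn (g1 y0 l0) + sqn (g2 y0 l0)) / (2 * kap)).
by move=> _ [[y l] [/= Cy' Cl'] <-]; exact: Q_bounded.
Qed.

Lemma SQ_sup_ge {y0 l0 y l} : C1 y0 -> C2 l0 -> C1 y -> C2 l -> Qp y l <= sup SQ.
Proof.
move=> Cy0 Cl0 Cy Cl; move: (sup_upper_bound (SQ_has_sup Cy0 Cl0)) => /(_ (Qp y l)); apply.
by exists (y, l).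
Qed.

Lemma SQ_sup_adh {y0 l0} d : C1 y0 -> C2 l0 -> 0 < d ->
  exists y, exists l, [/\ C1 y, C2 l & sup SQ - d < Qp y l].
Proof.
move=> Cy0 Cl0 d0; have [_ [[y l] [/= Cy Cl] <-] h] := sup_adherent d0 (SQ_has_sup Cy0 Cl0).
by exists y, l.
Qed.

Lemma SQ_sup_le {y0 l0} B : C1 y0 -> C2 l0 -> (forall y l, C1 y -> C2 l -> Qp y l <= B) -> sup SQ <= B.
Proof.
move=> Cy0 Cl0 h; apply: ge_sup; first by exists (Qp y0 l0); exists (y0, l0).
by move=> _ [[y l] [/= Cy Cl] <-]; exact: h.
Qed.

Lemma q_growth {y0 l0 yd ld} d {y l} : C1 y0 -> C2 l0 -> C1 yd -> C2 ld -> C1 y -> C2 l ->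
  sup SQ - d <= Qp yd ld ->
  Qp y l <= sup SQ + d - kap / 4 * (sqn (y - yd) + sqn (l - ld)).
Proof.
move=> Cy0 Cl0 Cyd Cld Cy Cl hd.
have h := @q_combo yd ld y l (1/2) Cyd Cld Cy Cl.
have hh : 0 <= (1 / 2 : R) <= 1 by apply/andP; split; lra.
have {}h := h hh.
have hs := SQ_sup_ge Cy0 Cl0 (convex_line cC1 Cyd Cy hh) (convex_line cC2 Cld Cl hh).
lra.
Qed.


Lemma q_step {y l y1 l1} al : C1 y -> C2 l -> C1 y1 -> C2 l1 -> 0 < al -> al * L <= 1 ->
  kap * al <= 1 ->
  (forall Y1 Y2, C1 Y1 -> C2 Y2 ->
     dotv (y + al *: g1 y l - y1) (Y1 - y1) + dotv (l + al *: g2 y l - l1) (Y2 - l1) <= 0) ->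
  forall y' l', C1 y' -> C2 l' -> Qp y' l' - Qp y1 l1 <= (1 - kap * al) * (Qp y' l' - Qp y l).
Proof.
move=> Cy Cl Cy1 Cl1 al0 alL kal hvi y' l' Cy' Cl'.
have th0 : 0 <= kap * al <= 1 by rewrite kal andbT mulr_ge0 // ltW.
have Cyt : C1 (y + (kap * al) *: (y' - y)) by exact: convex_line.
have Clt : C2 (l + (kap * al) *: (l' - l)) by exact: convex_line.
have I := hvi _ _ Cyt Clt.
have II := hLo _ _ _ _ Cy Cl Cy1 Cl1.
have III := hU _ _ _ _ Cy Cl Cyt Clt.
have IV := q_combo (kap * al) Cy Cl Cy' Cl' th0.
have e1 : forall k (a a1 b : 'rV[R]_k) (gg : 'rV[R]_k),
   dotv (a + al *: gg - a1) (a + (kap * al) *: (b - a) - a1) =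
   al * (kap * al) * dotv gg (b - a) - al * dotv gg (a1 - a) - (kap * al) * dotv (a1 - a) (b - a)
   + sqn (a1 - a).
  move=> k a a1 b gg.
  have -> : a + al *: gg - a1 = al *: gg - (a1 - a) by rewrite opprB addrAC addrC.
  have -> : a + (kap * al) *: (b - a) - a1 = (kap * al) *: (b - a) - (a1 - a).
    by rewrite opprB addrAC addrC.
  move: (a1 - a) (b - a) => D V.
  rewrite /sqn dotvBl !dotvBr !dotvZl !dotvZr; ring.
rewrite !e1 in I.
have e2 : forall k (a b : 'rV[R]_k), a + (kap * al) *: (b - a) - a = (kap * al) *: (b - a).
  by move=> k a b; rewrite addrAC subrr add0r.
rewrite !e2 !dotvZr !sqnZ in III.
have sq1 := sqn_ge0 (y1 - y - (kap * al) *: (y' - y)).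
have sq2 := sqn_ge0 (l1 - l - (kap * al) *: (l' - l)).
rewrite sqnB sqnZ dotvZr in sq1; rewrite sqnB sqnZ dotvZr in sq2.
have nD : 0 <= (1 - al * L) * (sqn (y1 - y) + sqn (l1 - l)).
  by apply: mulr_ge0; [rewrite subr_ge0 | rewrite addr_ge0 ?sqn_ge0].
have al0' : 0 <= al by exact: ltW.
have II' := ler_wpM2l al0' II.
have III' := ler_wpM2l al0' III.
have IV' := ler_wpM2l al0' IV.
suff : al * (Qp y' l' - Qp y1 l1) <= al * ((1 - kap * al) * (Qp y' l' - Qp y l)).
  by rewrite ler_pM2l.
lra.
Qed.

End Opt.

Section Bil.
Context {R : realType}.
Lemma bilin_derive {k} (a b c d : 'rV[R]_k) (s : R) :
  is_derive s 1 (fun t : R => dotv (a + t *: b) (c + t *: d))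
    (dotv b (c + s *: d) + dotv (a + s *: b) d).
Proof.
have -> : (fun t : R => dotv (a + t *: b) (c + t *: d)) =
  (fun t : R => dotv a c + t * (dotv a d + dotv b c) + t ^+ 2 * dotv b d).
  by apply/funext => t; rewrite !dotvDl !dotvDr !dotvZl !dotvZr; ring.
eapply is_derive_eq; first exact: poly2_derive.
rewrite !dotvDl !dotvDr !dotvZl !dotvZr; ring.
Qed.
End Bil.

Section Prob.
Context {R : realType} (D : pdata R).
Local Notation dx := (dx D). Local Notation dy := (dy D). Local Notation dl := (dl D).
Hypothesis hf : is_C1_grad (fbar D) (fbar_x D) (fbar_y D).

Lemma lin_id (x ex : 'rV[R]_dx) (y ey : 'rV[R]_dy) (t : R) :
  (x + t *: ex) *m (Am D)^T + (y + t *: ey) *m (Bm D)^T - cv D =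
  (x *m (Am D)^T + y *m (Bm D)^T - cv D) + t *: (ex *m (Am D)^T + ey *m (Bm D)^T).
Proof. by rewrite !mulmxDl -!scalemxAl; apply/rowP => i; rewrite !mxE; ring. Qed.

Lemma fval_line (x ex : 'rV[R]_dx) (y ey : 'rV[R]_dy) (l el : 'rV[R]_dl) (s : R) :
  is_derive s 1 (fun t => fval D (x + t *: ex) (y + t *: ey) (l + t *: el))
   (dotv (grad_fx D (x + s *: ex) (y + s *: ey) (l + s *: el)) ex
    + dotv (grad_fy D (x + s *: ex) (y + s *: ey) (l + s *: el)) ey
    + dotv (grad_fl D (x + s *: ex) (y + s *: ey) (l + s *: el)) el).
Proof.
have -> : (fun t => fval D (x + t *: ex) (y + t *: ey) (l + t *: el)) =
  (fun t => fbar D (x + t *: ex) (y + t *: ey) +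
            dotv (l + t *: el) ((x *m (Am D)^T + y *m (Bm D)^T - cv D)
                                 + t *: (ex *m (Am D)^T + ey *m (Bm D)^T))).
  by apply/funext => t; rewrite /fval lin_id.
eapply is_derive_eq.
  exact (is_deriveD (@C1_line _ _ _ _ _ _ hf x ex y ey s) (bilin_derive l el
     (x *m (Am D)^T + y *m (Bm D)^T - cv D) (ex *m (Am D)^T + ey *m (Bm D)^T) s)).
rewrite /grad_fx /grad_fy /grad_fl lin_id !dotvDl.
rewrite -(dotv_mulmxT (l + s *: el) ex) -(dotv_mulmxT (l + s *: el) ey).
rewrite !dotvDl !dotvDr !dotvNl !dotvNr !dotvZl !dotvZr.
rewrite ?(dotvC (x *m _) el) ?(dotvC (y *m _) el) ?(dotvC (ex *m _) el) ?(dotvC (ey *m _) el)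
  ?(dotvC (cv D) el).
rewrite !dotvDl !dotvDr ?(dotvC (ex *m _) el) ?(dotvC (ey *m _) el). ring.
Qed.


Variables (Lf Lg rho : R).
Hypothesis hg : is_C1_grad (gfun D) (g_1 D) (g_2 D).
Hypothesis hLf : forall x1 x2 y1 y2 l1 l2, Xs D x1 -> Xs D x2 -> Ys D y1 -> Ys D y2 -> Ls D l1 -> Ls D l2 ->
     enorm3 (grad_fx D x1 y1 l1 - grad_fx D x2 y2 l2)
            (grad_fy D x1 y1 l1 - grad_fy D x2 y2 l2)
            (grad_fl D x1 y1 l1 - grad_fl D x2 y2 l2)
     <= Lf * enorm3 (x1 - x2) (y1 - y2) (l1 - l2).
Hypothesis hLg : forall y1 y2 l1 l2, Ys D y1 -> Ys D y2 -> Ls D l1 -> Ls D l2 ->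
     enorm2 (g_1 D y1 l1 - g_1 D y2 l2) (g_2 D y1 l1 - g_2 D y2 l2)
     <= Lg * enorm2 (y1 - y2) (l1 - l2).
Hypotheses (Lf0 : 0 <= Lf) (Lg0 : 0 <= Lg) (rho0 : 0 <= rho).
Hypotheses (cX : convex_set (Xs D)) (cY : convex_set (Ys D)) (cL : convex_set (Ls D)).

Lemma sub_line {k} (a e : 'rV[R]_k) (s : R) : a + s *: e - a = s *: e.
Proof. by rewrite addrAC subrr add0r. Qed.

Lemma DX x x' y l : Xs D x -> Xs D x' -> Ys D y -> Ls D l ->
  `|fval D x' y l - fval D x y l - dotv (grad_fx D x y l) (x' - x)| <= Lf * sqn (x' - x) / 2.
Proof.
move=> Xx Xx' Yy Ll.
have := @descent1 _ (fun t => fval D (x + t *: (x' - x)) (y + t *: 0) (l + t *: 0)) _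
  (Lf * sqn (x' - x)) (fun s => fval_line x (x' - x) y 0 l 0 s).
have ex : x + (x' - x) = x' by rewrite addrC subrK.
rewrite /= !scaler0 !addr0 !dotv0r !addr0 scale1r scale0r addr0 ex.
apply=> s /andP[s0 s1].
have Xs' : Xs D (x + s *: (x' - x)) by apply: convex_line => //; rewrite s0 s1.
have := enorm3_sq Lf0 (hLf _ _ _ _ _ _ Xs' Xx Yy Yy Ll Ll).
rewrite sub_line !subrr !sqn0 !addr0 sqnZ => h.
rewrite !scaler0 !addr0 !dotv0r !addr0 -dotvBl.
have -> : Lf * sqn (x' - x) * s = (Lf * s) * sqn (x' - x) by ring.
apply: dotv_absle; first by rewrite mulr_ge0.
have := sqn_ge0 (grad_fy D (x + s *: (x' - x)) y l - grad_fy D x y l).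
have := sqn_ge0 (grad_fl D (x + s *: (x' - x)) y l - grad_fl D x y l).
rewrite exprMn; lra.
Qed.


Lemma DZ z z' l : Ys D z -> Ys D z' -> Ls D l ->
  `|gfun D z' l - gfun D z l - dotv (g_1 D z l) (z' - z)| <= Lg * sqn (z' - z) / 2.
Proof.
move=> Yz Yz' Ll.
have := @descent1 _ (fun t => gfun D (z + t *: (z' - z)) (l + t *: 0)) _
  (Lg * sqn (z' - z)) (fun s => @C1_line _ _ _ _ _ _ hg z (z' - z) l 0 s).
have ez : z + (z' - z) = z' by rewrite addrC subrK.
rewrite /= !scaler0 !addr0 !dotv0r !addr0 scale1r scale0r addr0 ez.
apply=> s /andP[s0 s1].
rewrite !scaler0 !addr0 !dotv0r !addr0 -dotvBl.
have Ys' : Ys D (z + s *: (z' - z)) by apply: convex_line => //; rewrite s0 s1.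
have := enorm2_sq Lg0 (hLg _ _ _ _ Ys' Yz Ll Ll).
rewrite sub_line !subrr !sqn0 !addr0 sqnZ => h.
have -> : Lg * sqn (z' - z) * s = (Lg * s) * sqn (z' - z) by ring.
apply: dotv_absle; first by rewrite mulr_ge0.
have := sqn_ge0 (g_2 D (z + s *: (z' - z)) l - g_2 D z l).
rewrite exprMn; lra.
Qed.

Definition gPy x y l (z : 'rV[R]_dy) := grad_fy D x y l - rho *: g_1 D y l.
Definition gPl x y l (z : 'rV[R]_dy) := grad_fl D x y l - rho *: (g_2 D y l - g_2 D z l).

Lemma DP x z y l y' l' : Xs D x -> Ys D z -> Ys D y -> Ls D l -> Ys D y' -> Ls D l' ->
  `|Prho D rho x y' l' z - Prho D rho x y l z
    - (dotv (gPy x y l z) (y' - y) + dotv (gPl x y l z) (l' - l))|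
  <= (Lf + 2 * rho * Lg) * (sqn (y' - y) + sqn (l' - l)) / 2.
Proof.
move=> Xx Yz Yy Ll Yy' Ll'.
set ey := y' - y; set el := l' - l.
have hd : forall s : R, is_derive s 1
  (fun t => fval D (x + t *: 0) (y + t *: ey) (l + t *: el)
     - rho * (gfun D (y + t *: ey) (l + t *: el) - gfun D (z + t *: 0) (l + t *: el)))
  ((dotv (grad_fx D (x + s *: 0) (y + s *: ey) (l + s *: el)) 0
    + dotv (grad_fy D (x + s *: 0) (y + s *: ey) (l + s *: el)) ey
    + dotv (grad_fl D (x + s *: 0) (y + s *: ey) (l + s *: el)) el)
   - rho *: ((dotv (g_1 D (y + s *: ey) (l + s *: el)) ey + dotv (g_2 D (y + s *: ey) (l + s *: el)) el)
     - (dotv (g_1 D (z + s *: 0) (l + s *: el)) 0 + dotv (g_2 D (z + s *: 0) (l + s *: el)) el))).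
  move=> s; eapply is_derive_eq.
    exact (is_deriveB (fval_line x 0 y ey l el s)
      (is_deriveZ rho (is_deriveB (@C1_line _ _ _ _ _ _ hg y ey l el s)
                                  (@C1_line _ _ _ _ _ _ hg z 0 l el s)))).
  by [].
have := @descent1 _ _ _ ((Lf + 2 * rho * Lg) * (sqn ey + sqn el)) hd.
have ey1 : y + ey = y' by rewrite /ey addrC subrK.
have el1 : l + el = l' by rewrite /el addrC subrK.
rewrite /= !scaler0 !addr0 !dotv0r !add0r !scale1r !scale0r !addr0 ey1 el1.
have -> : Prho D rho x y' l' z - Prho D rho x y l z
    - (dotv (gPy x y l z) ey + dotv (gPl x y l z) el)
  = fval D x y' l' - rho * (gfun D y' l' - gfun D z l') -
    (fval D x y l - rho * (gfun D y l - gfun D z l)) -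
    (dotv (grad_fy D x y l) ey + dotv (grad_fl D x y l) el -
     rho *: (dotv (g_1 D y l) ey + dotv (g_2 D y l) el - dotv (g_2 D z l) el)).
  rewrite /Prho /gPy /gPl !dotvBl !dotvZl !dotvBl /GRing.scale /=; ring.
apply=> s /andP[s0 s1].
rewrite !scaler0 !addr0 !dotv0r !add0r.
have Ys' : Ys D (y + s *: ey) by apply: convex_line => //; rewrite s0 s1.
have Ls' : Ls D (l + s *: el) by apply: convex_line => //; rewrite s0 s1.
set A := dotv (grad_fy D x (y + s *: ey) (l + s *: el) - grad_fy D x y l) ey
       + dotv (grad_fl D x (y + s *: ey) (l + s *: el) - grad_fl D x y l) el.
set B := dotv (g_1 D (y + s *: ey) (l + s *: el) - g_1 D y l) ey
       + dotv (g_2 D (y + s *: ey) (l + s *: el) - g_2 D y l) el.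
set C := dotv (g_2 D z (l + s *: el) - g_2 D z l) el.
have -> : dotv (grad_fy D x (y + s *: ey) (l + s *: el)) ey +
   dotv (grad_fl D x (y + s *: ey) (l + s *: el)) el -
   rho *: (dotv (g_1 D (y + s *: ey) (l + s *: el)) ey +
           dotv (g_2 D (y + s *: ey) (l + s *: el)) el -
           dotv (g_2 D z (l + s *: el)) el) -
   (dotv (grad_fy D x y l) ey + dotv (grad_fl D x y l) el -
    rho *: (dotv (g_1 D y l) ey + dotv (g_2 D y l) el - dotv (g_2 D z l) el))
   = A - rho * B + rho * C.
  rewrite /A /B /C !dotvBl /GRing.scale /=; ring.
set N := sqn ey + sqn el.
have N0 : 0 <= N by rewrite addr_ge0 ?sqn_ge0.
have s0' := s0.
have hA : `|A| <= Lf * s * N.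
  have := enorm3_sq Lf0 (hLf _ _ _ _ _ _ Xx Xx Ys' Yy Ls' Ll).
  rewrite !sub_line subrr sqn0 add0r !sqnZ => h.
  rewrite /A -!dotv_row_mx /N -sqn_row_mx; apply: dotv_absle; first by rewrite mulr_ge0.
  rewrite !sqn_row_mx.
  have := sqn_ge0 (grad_fx D x (y + s *: ey) (l + s *: el) - grad_fx D x y l).
  rewrite exprMn; lra.
have hB : `|B| <= Lg * s * N.
  have := enorm2_sq Lg0 (hLg _ _ _ _ Ys' Yy Ls' Ll).
  rewrite !sub_line !sqnZ => h.
  rewrite /B -!dotv_row_mx /N -sqn_row_mx; apply: dotv_absle; first by rewrite mulr_ge0.
  rewrite !sqn_row_mx exprMn; lra.
have hC : `|C| <= Lg * s * N.
  have := enorm2_sq Lg0 (hLg _ _ _ _ Yz Yz Ls' Ll).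
  rewrite !sub_line subrr sqn0 add0r !sqnZ => h.
  apply: (le_trans (y := Lg * s * sqn el)).
    apply: dotv_absle; first by rewrite mulr_ge0.
    have := sqn_ge0 (g_1 D z (l + s *: el) - g_1 D z l).
    rewrite exprMn; lra.
  rewrite ler_wpM2l ?mulr_ge0 // /N lerDr sqn_ge0 //.
have hB' : `|rho * B| <= rho * (Lg * s * N) by rewrite normrM ger0_norm // ler_wpM2l.
have hC' : `|rho * C| <= rho * (Lg * s * N) by rewrite normrM ger0_norm // ler_wpM2l.
apply: (le_trans (ler_normD _ _)).
apply: (le_trans (lerD (ler_normB _ _) (lexx _))).
have -> : (Lf + 2 * rho * Lg) * N * s = Lf * s * N + rho * (Lg * s * N) + rho * (Lg * s * N) by ring.
by apply: lerD; [apply: lerD|].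
Qed.


Variable tau : R.

Lemma Qexp x z u v y l y' l' :
  Qfun D rho tau x z u v y' l' - Qfun D rho tau x z u v y l
  - (dotv (grad_Qy D rho tau x z u v y l) (y' - y) + dotv (grad_Ql D rho tau x z u v y l) (l' - l))
  = (Prho D rho x y' l' z - Prho D rho x y l z
     - (dotv (gPy x y l z) (y' - y) + dotv (gPl x y l z) (l' - l)))
    - tau / 2 * (sqn (y' - y) + sqn (l' - l)).
Proof.
have e1 : y' - u = (y - u) + (y' - y) by rewrite [RHS]addrC addrA subrK.
have e2 : l' - v = (l - v) + (l' - l) by rewrite [RHS]addrC addrA subrK.
rewrite /Qfun e1 e2 /grad_Qy /grad_Ql -/(gPy x y l z) -/(gPl x y l z).
move: (y - u) (y' - y) (l - v) (l' - l) => a b c d.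
rewrite !sqnD !dotvBl !dotvZl. lra.
Qed.

Lemma WD x x' z z' u u' v v' qy ql : Xs D x -> Xs D x' -> Ys D z -> Ys D z' -> Ys D qy -> Ls D ql ->
  Qfun D rho tau x' z' u' v' qy ql <= Qfun D rho tau x z u v qy ql
   + (dotv (grad_fx D x qy ql) (x' - x) + dotv (rho *: g_1 D z ql) (z' - z)
      + dotv (tau *: (qy - u)) (u' - u) + dotv (tau *: (ql - v)) (v' - v))
   + (Lf / 2 * sqn (x' - x) + rho * Lg / 2 * sqn (z' - z)) + tau / 2 * (- sqn (u' - u) - sqn (v' - v)).
Proof.
move=> Xx Xx' Yz Yz' Yq Lq.
have hx := DX _ _ _ _ Xx Xx' Yq Lq; have hz := DZ _ _ _ Yz Yz' Lq.
have e1 : qy - u' = (qy - u) - (u' - u) by rewrite opprB addrA subrK.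
have e2 : ql - v' = (ql - v) - (v' - v) by rewrite opprB addrA subrK.
rewrite /Qfun /Prho e1 e2 [sqn (qy - u - _)]sqnB [sqn (ql - v - _)]sqnB !dotvZl.
move: hx hz; rewrite !ler_norml => /andP[hx1 hx2] /andP[hz1 hz2].
have hz2' := ler_wpM2l rho0 hz2.
lra.
Qed.

Lemma GL x z u v qy ql py pl : Xs D x -> Ys D z -> Ys D qy -> Ls D ql -> Ys D py -> Ls D pl ->
  sqn (grad_fx D x qy ql - grad_fx D x py pl) + sqn (rho *: g_1 D z ql - rho *: g_1 D z pl)
  + sqn (tau *: (qy - u) - tau *: (py - u)) + sqn (tau *: (ql - v) - tau *: (pl - v))
  <= (Lf ^+ 2 + rho ^+ 2 * Lg ^+ 2 + tau ^+ 2) * (sqn (qy - py) + sqn (ql - pl)).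
Proof.
move=> Xx Yz Yq Lq Yp Lp.
have h1 := enorm3_sq Lf0 (hLf _ _ _ _ _ _ Xx Xx Yq Yp Lq Lp).
have h2 := enorm2_sq Lg0 (hLg _ _ _ _ Yz Yz Lq Lp).
rewrite subrr sqn0 add0r in h1 h2.
rewrite -!scalerBr !sqnZ.
have -> : qy - u - (py - u) = qy - py by rewrite opprB addrA subrK.
have -> : ql - v - (pl - v) = ql - pl by rewrite opprB addrA subrK.
have a1 := sqn_ge0 (grad_fy D x qy ql - grad_fy D x py pl).
have a2 := sqn_ge0 (grad_fl D x qy ql - grad_fl D x py pl).
have a3 := sqn_ge0 (g_2 D z ql - g_2 D z pl).
have a4 := sqn_ge0 (qy - py).
have h2' := ler_wpM2l (sqr_ge0 rho) h2.
have b1 := mulr_ge0 (sqr_ge0 rho) a3.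
have b2 : 0 <= rho ^+ 2 * Lg ^+ 2 * sqn (qy - py) by rewrite !mulr_ge0 ?sqr_ge0 ?sqn_ge0.
rewrite subrr sqn0 add0r in h2'. lra.
Qed.

End Prob.

Section Helpers.
Context {R : realType}.
Lemma sqn_sym {k} (a b : 'rV[R]_k) : sqn (a - b) = sqn (b - a).
Proof. by rewrite -sqnN opprB. Qed.

Lemma vi_step {k} (a g a1 : 'rV[R]_k) (c : R) :
  dotv (a - c *: g - a1) (a - a1) <= 0 -> c * dotv g (a1 - a) <= - sqn (a1 - a).
Proof.
have -> : a - c *: g - a1 = - (c *: g + (a1 - a)) by rewrite opprD opprB addrAC addrC.
have -> : a - a1 = - (a1 - a) by rewrite opprB.
rewrite dotvNl dotvNr opprK dotvDl dotvZl /sqn; lra.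
Qed.

Lemma u_step {k} (u y : 'rV[R]_k) (a t : R) :
  a * dotv (t *: (y - u)) ((1 + a * t) *: u - (a * t) *: y - u) =
  - sqn ((1 + a * t) *: u - (a * t) *: y - u).
Proof.
have -> : (1 + a * t) *: u - (a * t) *: y - u = (- (a * t)) *: (y - u).
  by apply/rowP => i; rewrite !mxE; ring.
rewrite dotvZl dotvZr sqnZ /sqn; ring.
Qed.

Lemma young4 {k1 k2 k3 k4} (e1 d1 : 'rV[R]_k1) (e2 d2 : 'rV[R]_k2) (e3 d3 : 'rV[R]_k3)
  (e4 d4 : 'rV[R]_k4) c : 0 < c ->
  2 * (dotv e1 d1 + dotv e2 d2 + dotv e3 d3 + dotv e4 d4) <=
  c * (sqn e1 + sqn e2 + sqn e3 + sqn e4) + (sqn d1 + sqn d2 + sqn d3 + sqn d4) / c.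
Proof.
move=> c0; have h1 := young e1 d1 _ c0; have h2 := young e2 d2 _ c0.
have h3 := young e3 d3 _ c0; have h4 := young e4 d4 _ c0.
rewrite !mulrDl !mulrDr; lra.
Qed.

Lemma lim_delta (X Y C : R) : 0 <= C -> (forall d, 0 < d -> X <= Y + C * d) -> X <= Y.
Proof.
move=> C0 h; rewrite leNgt; apply/negP => XY.
have d0 : 0 < (X - Y) / (C + 1) by rewrite divr_gt0 // ?subr_gt0 //; lra.
have := h _ d0.
have : C * ((X - Y) / (C + 1)) < X - Y.
  rewrite mulrA ltr_pdivrMr; last lra.
  have : 0 < X - Y by lra.
  nra.
lra.
Qed.

Lemma coefB (Lf Lg rho kap tau ax Lth M : R) : 0 <= Lf -> 0 <= Lg -> 0 <= rho -> 0 < kap ->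
  Lf + 2 * rho * Lg + kap <= tau -> 0 < ax -> ax * Lth < 1 ->
  Lth = (Lf + rho * Lg + 2 * tau) * (1 + (Lf + 2 * rho * Lg + tau) / kap) ->
  M = Lf ^+ 2 + rho ^+ 2 * Lg ^+ 2 + tau ^+ 2 ->
  - (1 / ax) + (1 - ax * Lth) / (2 * ax) + M / kap + (Lf + rho * Lg) / 2 + (1 - ax * Lth) / (4 * ax) <= 0.
Proof.
move=> Lf0 Lg0 rho0 kap0 hLPk ax0 axL Lthe Me.
have b0 : 0 <= rho * Lg by rewrite mulr_ge0.
have tLf : Lf <= tau by nra.
have key : 4 * M <= 3 * ((Lf + rho * Lg + 2 * tau) * (Lf + 2 * rho * Lg + tau)).
  rewrite Me -[rho ^+ 2 * Lg ^+ 2]exprMn.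
  have e : 2 * rho * Lg = 2 * (rho * Lg) by rewrite mulrA.
  rewrite e in hLPk *.
  move: (rho * Lg) b0 hLPk => b b0 h.
  have t0 : 0 <= tau by nra.
  have h1 : Lf * Lf <= Lf * tau by rewrite ler_wpM2l.
  have h2 : 0 <= Lf * b by rewrite mulr_ge0.
  have h3 : 0 <= b * tau by rewrite mulr_ge0.
  have h4 : 0 <= b * b by rewrite mulr_ge0.
  have h5 : 0 <= tau * tau by rewrite mulr_ge0.
  have h0 : 0 <= Lf * Lf by rewrite mulr_ge0.
  rewrite !expr2; lra.
set P := Lf + rho * Lg + 2 * tau in key Lthe *.
set L := Lf + 2 * rho * Lg + tau in key Lthe *.
have k1 : M / kap <= 3 / 4 * (P * L / kap).
  rewrite mulrA ler_pM2r ?invr_gt0 //; lra.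
have e : 4 * ax * (- (1 / ax) + (1 - ax * Lth) / (2 * ax) + M / kap + (Lf + rho * Lg) / 2
   + (1 - ax * Lth) / (4 * ax)) = -4 + 3 * (1 - ax * Lth) + 4 * ax * (M / kap) + 2 * ax * (Lf + rho * Lg).
  by field; rewrite ?(gt_eqF kap0) ?(gt_eqF ax0).
have e2 : ax * Lth = ax * P + ax * (P * L / kap) by rewrite Lthe; field; rewrite ?(gt_eqF kap0) ?(gt_eqF ax0).
have k2 : ax * (M / kap) <= ax * (3 / 4 * (P * L / kap)) by rewrite ler_pM2l.
have k3 : 2 * ax * (Lf + rho * Lg) <= 3 * (ax * P).
  rewrite /P; have : 0 <= ax * (Lf + rho * Lg + 6 * tau) by rewrite mulr_ge0 ?ltW //; nra.
  nra.
rewrite -(pmulr_rle0 _ (_ : 0 < 4 * ax)); last by rewrite mulr_gt0.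
rewrite e; lra.
Qed.
End Helpers.

Section MainSec.
Context {R : realType} (D : pdata R).
Variables (Lf Lg rho kap tau : R).
Hypothesis hf : is_C1_grad (fbar D) (fbar_x D) (fbar_y D).
Hypothesis hg : is_C1_grad (gfun D) (g_1 D) (g_2 D).
Hypothesis hLf : forall x1 x2 y1 y2 l1 l2, Xs D x1 -> Xs D x2 -> Ys D y1 -> Ys D y2 -> Ls D l1 -> Ls D l2 ->
     enorm3 (grad_fx D x1 y1 l1 - grad_fx D x2 y2 l2)
            (grad_fy D x1 y1 l1 - grad_fy D x2 y2 l2)
            (grad_fl D x1 y1 l1 - grad_fl D x2 y2 l2)
     <= Lf * enorm3 (x1 - x2) (y1 - y2) (l1 - l2).
Hypothesis hLg : forall y1 y2 l1 l2, Ys D y1 -> Ys D y2 -> Ls D l1 -> Ls D l2 ->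
     enorm2 (g_1 D y1 l1 - g_1 D y2 l2) (g_2 D y1 l1 - g_2 D y2 l2)
     <= Lg * enorm2 (y1 - y2) (l1 - l2).
Hypotheses (Lf0 : 0 <= Lf) (Lg0 : 0 <= Lg) (rho0 : 0 <= rho) (kap0 : 0 < kap).
Hypotheses (cX : convex_set (Xs D)) (cY : convex_set (Ys D)) (cL : convex_set (Ls D)).
Hypothesis hLPk : Lf + 2 * rho * Lg + kap <= tau.

Lemma hUw xx zz uu vv : Xs D xx -> Ys D zz -> forall y l y' l', Ys D y -> Ls D l -> Ys D y' -> Ls D l' ->
  Qfun D rho tau xx zz uu vv y' l' <= Qfun D rho tau xx zz uu vv y l
   + (dotv (grad_Qy D rho tau xx zz uu vv y l) (y' - y) + dotv (grad_Ql D rho tau xx zz uu vv y l) (l' - l))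
   - kap / 2 * (sqn (y' - y) + sqn (l' - l)).
Proof.
move=> Xx Yz y l y' l' Yy Ll Yy' Ll'.
have e := Qexp D rho tau xx zz uu vv y l y' l'.
have d := DP D hf Lf Lg rho hg hLf hLg Lf0 Lg0 rho0 cY cL _ _ _ _ _ _ Xx Yz Yy Ll Yy' Ll'.
rewrite ler_norml in d; case/andP: d => d1 d2.
have N0 : 0 <= sqn (y' - y) + sqn (l' - l) by rewrite addr_ge0 ?sqn_ge0.
have h0 : 0 <= tau - (Lf + 2 * rho * Lg + kap) by rewrite subr_ge0.
have := mulr_ge0 h0 N0.
lra.
Qed.

Lemma hLow xx zz uu vv : Xs D xx -> Ys D zz -> forall y l y' l', Ys D y -> Ls D l -> Ys D y' -> Ls D l' ->
  Qfun D rho tau xx zz uu vv y l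
   + (dotv (grad_Qy D rho tau xx zz uu vv y l) (y' - y) + dotv (grad_Ql D rho tau xx zz uu vv y l) (l' - l))
   - (Lf + 2 * rho * Lg + tau) / 2 * (sqn (y' - y) + sqn (l' - l))
  <= Qfun D rho tau xx zz uu vv y' l'.
Proof.
move=> Xx Yz y l y' l' Yy Ll Yy' Ll'.
have e := Qexp D rho tau xx zz uu vv y l y' l'.
have d := DP D hf Lf Lg rho hg hLf hLg Lf0 Lg0 rho0 cY cL _ _ _ _ _ _ Xx Yz Yy Ll Yy' Ll'.
rewrite ler_norml in d; case/andP: d => d1 d2.
lra.
Qed.

Lemma inner xx zz uu vv (yi : nat -> 'rV[R]_(dy D)) (li : nat -> 'rV[R]_(dl D)) (ay : R) (T : nat) :
  Xs D xx -> Ys D zz -> Ys D (yi 0%N) -> Ls D (li 0%N) -> 0 < ay ->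
  ay * (Lf + 2 * rho * Lg + tau) <= 1 -> kap * ay <= 1 ->
  (forall t, (t < T)%N ->
     is_proj (Ys D) (yi t + ay *: grad_Qy D rho tau xx zz uu vv (yi t) (li t)) (yi t.+1) /\
     is_proj (Ls D) (li t + ay *: grad_Ql D rho tau xx zz uu vv (yi t) (li t)) (li t.+1)) ->
  forall t, (t <= T)%N -> [/\ Ys D (yi t), Ls D (li t) &
    vartheta D rho tau xx zz uu vv - Qfun D rho tau xx zz uu vv (yi t) (li t) <=
    (1 - kap * ay) ^+ t * (vartheta D rho tau xx zz uu vv - Qfun D rho tau xx zz uu vv (yi 0%N) (li 0%N))].
Proof.
move=> Xx Yz Y0 L0 ay0 ayL kay hp.
elim=> [|t IH] ht; first by split => //; rewrite expr0 mul1r.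
have [Yt Lt IHt] := IH (ltnW ht).
have [p1 p2] := hp t ht.
have [Yt1 _] := p1; have [Lt1 _] := p2.
split => //.
have hU := hUw xx zz uu vv Xx Yz; have hL := hLow xx zz uu vv Xx Yz.
have vi : forall Y1 Y2, Ys D Y1 -> Ls D Y2 ->
   dotv (yi t + ay *: grad_Qy D rho tau xx zz uu vv (yi t) (li t) - yi t.+1) (Y1 - yi t.+1) +
   dotv (li t + ay *: grad_Ql D rho tau xx zz uu vv (yi t) (li t) - li t.+1) (Y2 - li t.+1) <= 0.
  move=> Y1 Y2 hY1 hY2; have := proj_vi _ _ _ _ cY p1 hY1; have := proj_vi _ _ _ _ cL p2 hY2; lra.
have st := q_step cY cL kap0 hU hL ay Yt Lt Yt1 Lt1 ay0 ayL kay vi.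
have k0 : 0 <= 1 - kap * ay by lra.
have hV : vartheta D rho tau xx zz uu vv <= Qfun D rho tau xx zz uu vv (yi t.+1) (li t.+1)
     + (1 - kap * ay) * (vartheta D rho tau xx zz uu vv - Qfun D rho tau xx zz uu vv (yi t) (li t)).
  eapply (@SQ_sup_le _ _ _ (Ys D) (Ls D) (Qfun D rho tau xx zz uu vv) _ _ _ Yt1 Lt1) => q1 q2 hq1 hq2.
  have hq : Qfun D rho tau xx zz uu vv q1 q2 <= vartheta D rho tau xx zz uu vv :=
    SQ_sup_ge kap0 hU Yt1 Lt1 hq1 hq2.
  have := st q1 q2 hq1 hq2.
  have := ler_wpM2l k0 (lerB hq (lexx (Qfun D rho tau xx zz uu vv (yi t) (li t)))).
  lra.
rewrite exprS; have := ler_wpM2l k0 IHt; lra.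
Qed.


Lemma outer (ax Lth : R) xx xx1 zz zz1 uu uu1 vv vv1 yh lh :
  Lth = (Lf + rho * Lg + 2 * tau) * (1 + (Lf + 2 * rho * Lg + tau) / kap) ->
  0 < ax -> ax * Lth < 1 ->
  Xs D xx -> Xs D xx1 -> Ys D zz -> Ys D zz1 -> Ys D yh -> Ls D lh ->
  is_proj (Xs D) (xx - ax *: grad_fx D xx yh lh) xx1 ->
  is_proj (Ys D) (zz - (ax * rho) *: g_1 D zz lh) zz1 ->
  uu1 = (1 + ax * tau) *: uu - (ax * tau) *: yh ->
  vv1 = (1 + ax * tau) *: vv - (ax * tau) *: lh ->
  (1 - ax * Lth) / (4 * ax) * (sqn (xx1 - xx) + sqn (zz1 - zz) + sqn (uu1 - uu) + sqn (vv1 - vv))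
  <= vartheta D rho tau xx zz uu vv - vartheta D rho tau xx1 zz1 uu1 vv1
     + 2 * ax * (Lf ^+ 2 + rho ^+ 2 * Lg ^+ 2 + tau ^+ 2) / (kap * (1 - ax * Lth))
       * (vartheta D rho tau xx zz uu vv - Qfun D rho tau xx zz uu vv yh lh).
Proof.
move=> Lthe ax0 axL Xx Xx1 Yz Yz1 Yyh Llh px pz eu ev.
have b0 : 0 <= rho * Lg by rewrite mulr_ge0.
have b1 : 0 <= 2 * rho * Lg by rewrite !mulr_ge0.
have tau0 : 0 < tau by have := hLPk; have := kap0; have := Lf0; lra.
have M0 : 0 < Lf ^+ 2 + rho ^+ 2 * Lg ^+ 2 + tau ^+ 2.
  by apply: (lt_le_trans (_ : 0 < tau ^+ 2)); rewrite ?exprn_gt0 // lerDr addr_ge0 ?mulr_ge0 ?sqr_ge0.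
have t0 : 0 < 1 - ax * Lth by rewrite subr_gt0.
have K0 : 0 <= 2 * ax * (Lf ^+ 2 + rho ^+ 2 * Lg ^+ 2 + tau ^+ 2) / (kap * (1 - ax * Lth)).
  by rewrite divr_ge0 ?mulr_ge0 ?ltW // mulr_gt0.
have hU0 := hUw xx zz uu vv Xx Yz.
have hU1 := hUw xx1 zz1 uu1 vv1 Xx1 Yz1.
apply: (@lim_delta _ _ _ (2 + 2 * ax * (Lf ^+ 2 + rho ^+ 2 * Lg ^+ 2 + tau ^+ 2) / (kap * (1 - ax * Lth)))).
  by rewrite addr_ge0.
move=> d d0.
have [qy [ql [Yq Lq hq]]] := SQ_sup_adh kap0 hU1 d Yyh Llh d0.
have hq' : vartheta D rho tau xx1 zz1 uu1 vv1 - d < Qfun D rho tau xx1 zz1 uu1 vv1 qy ql := hq.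
have [py [pl [Yp Lp hp]]] := SQ_sup_adh kap0 hU0 d Yyh Llh d0.
have hp' : vartheta D rho tau xx zz uu vv - d <= Qfun D rho tau xx zz uu vv py pl := ltW hp.
have h2 := WD D hf Lf Lg rho hg hLf hLg Lf0 Lg0 rho0 cX cY tau xx xx1 zz zz1 uu uu1 vv vv1 qy ql
   Xx Xx1 Yz Yz1 Yq Lq.
have h3 : Qfun D rho tau xx zz uu vv qy ql <= vartheta D rho tau xx zz uu vv + d
    - kap / 4 * (sqn (qy - py) + sqn (ql - pl)) := q_growth cY cL kap0 hU0 d Yyh Llh Yp Lp Yq Lq hp'.
have h3' : Qfun D rho tau xx zz uu vv yh lh <= vartheta D rho tau xx zz uu vv + d
    - kap / 4 * (sqn (yh - py) + sqn (lh - pl)) := q_growth cY cL kap0 hU0 d Yyh Llh Yp Lp Yyh Llh hp'.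
rewrite (sqn_sym yh) (sqn_sym lh) in h3'.
have GL2 := GL D Lf Lg rho hLf hLg Lf0 Lg0 rho0 tau xx zz uu vv py pl yh lh Xx Yz Yp Lp Yyh Llh.
have GL3 := GL D Lf Lg rho hLf hLg Lf0 Lg0 rho0 tau xx zz uu vv qy ql py pl Xx Yz Yq Lq Yp Lp.
have VIx := vi_step _ _ _ _ (proj_vi _ _ _ _ cX px Xx).
have VIz := vi_step _ _ _ _ (proj_vi _ _ _ _ cY pz Yz).
have Uu : ax * dotv (tau *: (yh - uu)) (uu1 - uu) = - sqn (uu1 - uu) by rewrite eu; exact: u_step.
have Vv : ax * dotv (tau *: (lh - vv)) (vv1 - vv) = - sqn (vv1 - vv) by rewrite ev; exact: u_step.
have eZ := dotvZl rho (g_1 D zz lh) (zz1 - zz).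
have Nd0 : 0 <= (sqn (xx1 - xx) + sqn (zz1 - zz) + sqn (uu1 - uu) + sqn (vv1 - vv)) by rewrite !addr_ge0 ?sqn_ge0.
have c0 : 0 < ax / (1 - ax * Lth) by rewrite divr_gt0.
have Y2 := young4 (grad_fx D xx py pl - grad_fx D xx yh lh) (xx1 - xx)
   (rho *: g_1 D zz pl - rho *: g_1 D zz lh) (zz1 - zz)
   (tau *: (py - uu) - tau *: (yh - uu)) (uu1 - uu)
   (tau *: (pl - vv) - tau *: (lh - vv)) (vv1 - vv) _ c0.
have c20 : 0 < kap / (2 * (Lf ^+ 2 + rho ^+ 2 * Lg ^+ 2 + tau ^+ 2)) by rewrite divr_gt0 // mulr_gt0.
have Y3 := young4 (grad_fx D xx qy ql - grad_fx D xx py pl) (xx1 - xx)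
   (rho *: g_1 D zz ql - rho *: g_1 D zz pl) (zz1 - zz)
   (tau *: (qy - uu) - tau *: (py - uu)) (uu1 - uu)
   (tau *: (ql - vv) - tau *: (pl - vv)) (vv1 - vv) _ c20.
have decomp : (dotv (grad_fx D xx qy ql) (xx1 - xx) + dotv (rho *: g_1 D zz ql) (zz1 - zz) + dotv (tau *: (qy - uu)) (uu1 - uu) + dotv (tau *: (ql - vv)) (vv1 - vv)) = (dotv (grad_fx D xx yh lh) (xx1 - xx) + dotv (rho *: g_1 D zz lh) (zz1 - zz) + dotv (tau *: (yh - uu)) (uu1 - uu) + dotv (tau *: (lh - vv)) (vv1 - vv)) + (dotv (grad_fx D xx py pl - grad_fx D xx yh lh) (xx1 - xx) + dotv (rho *: g_1 D zz pl - rho *: g_1 D zz lh) (zz1 - zz) + dotv (tau *: (py - uu) - tau *: (yh - uu)) (uu1 - uu) + dotv (tau *: (pl - vv) - tau *: (lh - vv)) (vv1 - vv)) + (dotv (grad_fx D xx qy ql - grad_fx D xx py pl) (xx1 - xx) + dotv (rho *: g_1 D zz ql - rho *: g_1 D zz pl) (zz1 - zz) + dotv (tau *: (qy - uu) - tau *: (py - uu)) (uu1 - uu) + dotv (tau *: (ql - vv) - tau *: (pl - vv)) (vv1 - vv)) by rewrite !dotvBl; ring.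
have nz : forall r : R, 0 < r -> r != 0 by move=> r r0; rewrite gt_eqF.
have F1 : (dotv (grad_fx D xx yh lh) (xx1 - xx) + dotv (rho *: g_1 D zz lh) (zz1 - zz) + dotv (tau *: (yh - uu)) (uu1 - uu) + dotv (tau *: (lh - vv)) (vv1 - vv)) <= - (1 / ax) * (sqn (xx1 - xx) + sqn (zz1 - zz) + sqn (uu1 - uu) + sqn (vv1 - vv)).
  rewrite -(ler_pM2l ax0).
  have -> : ax * (- (1 / ax) * (sqn (xx1 - xx) + sqn (zz1 - zz) + sqn (uu1 - uu) + sqn (vv1 - vv))) = - (sqn (xx1 - xx) + sqn (zz1 - zz) + sqn (uu1 - uu) + sqn (vv1 - vv)) by field; exact: nz.
  rewrite eZ; lra.
have F2a := ler_wpM2l (ltW c0) GL2.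
have F2b : ax / (1 - ax * Lth) * ((Lf ^+ 2 + rho ^+ 2 * Lg ^+ 2 + tau ^+ 2) * (sqn (py - yh) + sqn (pl - lh)))
   = 2 * (2 * ax * (Lf ^+ 2 + rho ^+ 2 * Lg ^+ 2 + tau ^+ 2) / (kap * (1 - ax * Lth))) * (kap * (sqn (py - yh) + sqn (pl - lh)) / 4).
  by field; rewrite ?exprMn !nz //.
have F2c : kap * (sqn (py - yh) + sqn (pl - lh)) / 4 <= (vartheta D rho tau xx zz uu vv - Qfun D rho tau xx zz uu vv yh lh) + d by lra.
have F2d := ler_wpM2l (mulr_ge0 (ler0n _ 2) K0) F2c.
have F2e : (sqn (xx1 - xx) + sqn (zz1 - zz) + sqn (uu1 - uu) + sqn (vv1 - vv)) / (ax / (1 - ax * Lth)) = 2 * ((1 - ax * Lth) / (2 * ax) * (sqn (xx1 - xx) + sqn (zz1 - zz) + sqn (uu1 - uu) + sqn (vv1 - vv))).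
  by field; rewrite ?exprMn !nz //.
have F2 : (dotv (grad_fx D xx py pl - grad_fx D xx yh lh) (xx1 - xx) + dotv (rho *: g_1 D zz pl - rho *: g_1 D zz lh) (zz1 - zz) + dotv (tau *: (py - uu) - tau *: (yh - uu)) (uu1 - uu) + dotv (tau *: (pl - vv) - tau *: (lh - vv)) (vv1 - vv)) <= (2 * ax * (Lf ^+ 2 + rho ^+ 2 * Lg ^+ 2 + tau ^+ 2) / (kap * (1 - ax * Lth))) * ((vartheta D rho tau xx zz uu vv - Qfun D rho tau xx zz uu vv yh lh) + d) + (1 - ax * Lth) / (2 * ax) * (sqn (xx1 - xx) + sqn (zz1 - zz) + sqn (uu1 - uu) + sqn (vv1 - vv)) by lra.
have F3a := ler_wpM2l (ltW c20) GL3.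
have F3b : kap / (2 * (Lf ^+ 2 + rho ^+ 2 * Lg ^+ 2 + tau ^+ 2)) * ((Lf ^+ 2 + rho ^+ 2 * Lg ^+ 2 + tau ^+ 2) * (sqn (qy - py) + sqn (ql - pl)))
   = 2 * (kap / 4 * (sqn (qy - py) + sqn (ql - pl))).
  by field; rewrite ?exprMn !nz //.
have F3c : (sqn (xx1 - xx) + sqn (zz1 - zz) + sqn (uu1 - uu) + sqn (vv1 - vv)) / (kap / (2 * (Lf ^+ 2 + rho ^+ 2 * Lg ^+ 2 + tau ^+ 2))) = 2 * ((Lf ^+ 2 + rho ^+ 2 * Lg ^+ 2 + tau ^+ 2) / kap * (sqn (xx1 - xx) + sqn (zz1 - zz) + sqn (uu1 - uu) + sqn (vv1 - vv))).
  by field; rewrite ?exprMn !nz //.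
have F3 : (dotv (grad_fx D xx qy ql - grad_fx D xx py pl) (xx1 - xx) + dotv (rho *: g_1 D zz ql - rho *: g_1 D zz pl) (zz1 - zz) + dotv (tau *: (qy - uu) - tau *: (py - uu)) (uu1 - uu) + dotv (tau *: (ql - vv) - tau *: (pl - vv)) (vv1 - vv)) <= kap / 4 * (sqn (qy - py) + sqn (ql - pl)) + (Lf ^+ 2 + rho ^+ 2 * Lg ^+ 2 + tau ^+ 2) / kap * (sqn (xx1 - xx) + sqn (zz1 - zz) + sqn (uu1 - uu) + sqn (vv1 - vv)) by lra.
have F4a : 0 <= Lf * (sqn (zz1 - zz) + sqn (uu1 - uu) + sqn (vv1 - vv)) by apply: mulr_ge0 => //; rewrite !addr_ge0 ?sqn_ge0.
have F4b : 0 <= rho * Lg * (sqn (xx1 - xx) + sqn (uu1 - uu) + sqn (vv1 - vv)) by apply: mulr_ge0 => //; rewrite !addr_ge0 ?sqn_ge0.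
have F6 : 0 <= tau * (sqn (uu1 - uu) + sqn (vv1 - vv)) by apply: mulr_ge0; [exact: ltW | rewrite !addr_ge0 ?sqn_ge0].
have F5 := mulr_le0_ge0 (coefB _ _ _ _ _ _ _ _ Lf0 Lg0 rho0 kap0 hLPk ax0 axL Lthe (erefl (Lf ^+ 2 + rho ^+ 2 * Lg ^+ 2 + tau ^+ 2))) Nd0.
lra.
Qed.

End MainSec.

Theorem mainTheorem8 (R : realType) (D : pdata R) (Lf Lg rho kappa tau ax ay : R)
  (T K : nat)
  (x : nat -> 'rV[R]_(dx D)) (z y u : nat -> 'rV[R]_(dy D)) (lam v : nat -> 'rV[R]_(dl D))
  (yin : nat -> nat -> 'rV[R]_(dy D)) (lin : nat -> nat -> 'rV[R]_(dl D)) :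
  (* standing assumptions *)
  Xs D !=set0 -> convex_set (Xs D) -> compact (Xs D) ->
  Ys D !=set0 -> convex_set (Ys D) -> compact (Ys D) ->
  Ls D !=set0 -> convex_set (Ls D) -> compact (Ls D) ->
  is_C1_grad (fbar D) (fbar_x D) (fbar_y D) ->
  0 < Lf ->
  (forall x1 x2 y1 y2 l1 l2, Xs D x1 -> Xs D x2 -> Ys D y1 -> Ys D y2 -> Ls D l1 -> Ls D l2 ->
     enorm3 (grad_fx D x1 y1 l1 - grad_fx D x2 y2 l2)
            (grad_fy D x1 y1 l1 - grad_fy D x2 y2 l2)
            (grad_fl D x1 y1 l1 - grad_fl D x2 y2 l2)
     <= Lf * enorm3 (x1 - x2) (y1 - y2) (l1 - l2)) ->
  is_C1_grad (gfun D) (g_1 D) (g_2 D) ->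
  0 <= Lg ->
  (forall y1 y2 l1 l2, Ys D y1 -> Ys D y2 -> Ls D l1 -> Ls D l2 ->
     enorm2 (g_1 D y1 l1 - g_1 D y2 l2) (g_2 D y1 l1 - g_2 D y2 l2)
     <= Lg * enorm2 (y1 - y2) (l1 - l2)) ->
  (forall l, Ls D l -> forall a b (t : R), 0 <= t <= 1 ->
     gfun D (t *: a + (1 - t) *: b) l <= t * gfun D a l + (1 - t) * gfun D b l) ->
  (exists zs ls, Ys D zs /\ Ls D ls /\
     gfun D zs ls = sup [set inf [set gfun D z' l' | z' in Ys D] | l' in Ls D] /\
     gfun D zs ls = inf [set sup [set gfun D z' l' | l' in Ls D] | z' in Ys D]) ->
  (* parameters *)
  let LP := Lf + 2 * rho * Lg in
  let Ltheta := (Lf + rho * Lg + 2 * tau) * (1 + (LP + tau) / kappa) in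
  0 < rho -> 0 < kappa -> LP + kappa <= tau ->
  0 < ay < 1 / (LP + tau) -> 0 < ax < 1 / Ltheta ->
  (1 < T)%N -> (1 < K)%N ->
  (* PG-MAD iterates *)
  Xs D (x 0%N) -> Ys D (z 0%N) -> Ys D (y 0%N) -> Ls D (lam 0%N) ->
  (forall k, (k < K)%N ->
     [/\ yin k 0%N = y k /\ lin k 0%N = lam k,
      (forall t, (t < T)%N ->
         is_proj (Ys D) (yin k t + ay *: grad_Qy D rho tau (x k) (z k) (u k) (v k) (yin k t) (lin k t))
                 (yin k t.+1) /\
         is_proj (Ls D) (lin k t + ay *: grad_Ql D rho tau (x k) (z k) (u k) (v k) (yin k t) (lin k t))
                 (lin k t.+1)),
      y k.+1 = yin k T /\ lam k.+1 = lin k T,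
      is_proj (Xs D) (x k - ax *: grad_fx D (x k) (y k.+1) (lam k.+1)) (x k.+1) /\
      is_proj (Ys D) (z k - (ax * rho) *: g_1 D (z k) (lam k.+1)) (z k.+1) &
      u k.+1 = (1 + ax * tau) *: u k - (ax * tau) *: y k.+1 /\
      v k.+1 = (1 + ax * tau) *: v k - (ax * tau) *: lam k.+1]) ->
  forall k, (k < K)%N ->
    let Delta := vartheta D rho tau (x k) (z k) (u k) (v k)
                 - Qfun D rho tau (x k) (z k) (u k) (v k) (y k) (lam k) in
    (1 - ax * Ltheta) / (4 * ax) *
      (sqn (x k.+1 - x k) + sqn (z k.+1 - z k) + sqn (u k.+1 - u k) + sqn (v k.+1 - v k))
    <= vartheta D rho tau (x k) (z k) (u k) (v k)
       - vartheta D rho tau (x k.+1) (z k.+1) (u k.+1) (v k.+1)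
       + 2 * ax * (Lf ^+ 2 + rho ^+ 2 * Lg ^+ 2 + tau ^+ 2) / (kappa * (1 - ax * Ltheta))
         * (1 - kappa * ay) ^+ T * Delta.
Proof.
move=> X0 cX kX Y0 cY kY L0 cL kL hf Lf0 hLf hg Lg0 hLg gconv hsad LP Lth rho0 kap0 hLPk
  /andP[ay0 ay1] /andP[ax0 ax1] T1 K1 Xx0 Yz0 Yy0 Ll0 hit k kK.
cbv zeta.
have Lf0' := ltW Lf0; have rho0' := ltW rho0.
have b1 : 0 <= 2 * rho * Lg by rewrite !mulr_ge0.
have hLPk' : Lf + 2 * rho * Lg + kappa <= tau by exact: hLPk.
have tau0 : 0 < tau by lra.
have P0 : 0 < Lf + 2 * rho * Lg + tau by lra.
have ayL : ay * (Lf + 2 * rho * Lg + tau) <= 1.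
  by apply: ltW; move: ay1; rewrite /LP ltr_pdivlMr // mul1r.
have kay : kappa * ay <= 1.
  apply: le_trans ayL; rewrite mulrC ler_pM2l //; lra.
have Lthe : Lth = (Lf + rho * Lg + 2 * tau) * (1 + (Lf + 2 * rho * Lg + tau) / kappa) by [].
have Lth0 : 0 < Lth.
  have r0 : 0 <= rho * Lg by rewrite mulr_ge0.
  have q0 : 0 <= (Lf + 2 * rho * Lg + tau) / kappa by rewrite divr_ge0 ?ltW.
  rewrite Lthe; apply: mulr_gt0; lra.
have axL : ax * Lth < 1 by move: ax1; rewrite ltr_pdivlMr // mul1r.
clearbody LP Lth.
have inv : forall j, (j <= K)%N -> [/\ Xs D (x j), Ys D (z j), Ys D (y j) & Ls D (lam j)].
  elim=> [|j IH] hj; first by [].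
  have [[a1 a2] b [c1 c2] [[Xj1 _] [Zj1 _]] _] := hit j hj.
  have [Xj Zj Yj Lj] := IH (ltnW hj).
  have inn : forall t, (t <= T)%N -> Ys D (yin j t) /\ Ls D (lin j t).
    elim=> [|t IHt] ht; first by rewrite a1 a2.
    by have [[? _] [? _]] := b t ht.
  have [? ?] := inn T (leqnn T).
  by split => //; rewrite ?c1 ?c2.
have [Xk Zk Yk Lk] := inv k (ltnW kK).
have [Xk1 Zk1 Yk1 Lk1] := inv k.+1 kK.
have [[a1 a2] b [c1 c2] [px pz] [eu ev]] := hit k kK.
have Y0' : Ys D (yin k 0%N) by rewrite a1.
have L0' : Ls D (lin k 0%N) by rewrite a2.
have [_ _ hin] := @inner _ D Lf Lg rho kappa tau hf hg hLf hLg Lf0' Lg0 rho0' kap0 cY cL hLPk'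
  (x k) (z k) (u k) (v k) (yin k) (lin k) ay T Xk Zk Y0' L0' ay0 ayL kay b T (leqnn T).
rewrite -c1 -c2 a1 a2 in hin.
have ho := @outer _ D Lf Lg rho kappa tau hf hg hLf hLg Lf0' Lg0 rho0' kap0 cX cY cL hLPk'
  ax Lth (x k) (x k.+1) (z k) (z k.+1) (u k) (u k.+1) (v k) (v k.+1) (y k.+1) (lam k.+1)
  Lthe ax0 axL Xk Xk1 Zk Zk1 Yk1 Lk1 px pz eu ev.
have t0 : 0 < 1 - ax * Lth by rewrite subr_gt0.
have K0 : 0 <= 2 * ax * (Lf ^+ 2 + rho ^+ 2 * Lg ^+ 2 + tau ^+ 2) / (kappa * (1 - ax * Lth)).
  have M0 : 0 <= Lf ^+ 2 + rho ^+ 2 * Lg ^+ 2 + tau ^+ 2.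
    by apply: addr_ge0; [apply: addr_ge0; [exact: sqr_ge0 | apply: mulr_ge0; exact: sqr_ge0] | exact: sqr_ge0].
  apply: divr_ge0; first by rewrite !mulr_ge0 // ltW.
  by apply: mulr_ge0; apply: ltW.
have := ler_wpM2l K0 hin.
rewrite -mulrA.
lra.
Qed.
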